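(* Let $M$ be a magma satisfying $(xy)z = xz$ and $x(yz) = xz$ for all $x,y,z\in M$. Then $M$ satisfies the identities $(xy)z = x(yz)$ and $x(yx) = x$ for all $x,y,z\in M$ (i.e. $M$ is a rectangular band) if and only if $M$ avoids the $2$-element null semigroup $2_N$ on $\{0,1\}$ with Cayley table \[ \begin{array}{c|cc} 2_{N} & 0 & 1 \\ \hline 0 & 0 & 0 \\ 1 & 0 & 0 \end{array}. \]
   Context: A magma is a nonempty set with a binary operation, written by juxtaposition. A magma $M$ avoids a magma $F$ if no submagma of $M$ is isomorphic to $F$. *)

(* Defs.v *)
(* The 2-element null semigroup 2_N on {0,1}, encoded as bool
   (false = 0, true = 1): every product is 0. *)
Definition null2 (a b : bool) : bool := false.

Definition is_submagma {T : Type} (op : T -> T -> T) (S : T -> Prop) : Prop :=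
  (exists x, S x) /\ (forall x y, S x -> S y -> S (op x y)).

Definition has_submagma_iso {U T : Type} (opU : U -> U -> U)
    (op : T -> T -> T) : Prop :=
  exists S : T -> Prop, is_submagma op S /\
    exists f : U -> T,
      (forall u, S (f u)) /\
      (forall u v, f u = f v -> u = v) /\
      (forall x, S x -> exists u, f u = x) /\
      (forall u v, f (opU u v) = op (f u) (f v)).

Definition avoids {U T : Type} (opU : U -> U -> U) (op : T -> T -> T) : Prop :=
  ~ has_submagma_iso opU op.

(* Main.v *)
Require Import Defs.
From Stdlib Require Import Classical.

Theorem mainTheorem2 (T : Type) (op : T -> T -> T) (hne : inhabited T)
  (h1 : forall x y z : T, op (op x y) z = op x z)
  (h2 : forall x y z : T, op x (op y z) = op x z) :
  ((forall x y z : T, op (op x y) z = op x (op y z)) /\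
   (forall x y : T, op x (op y x) = x))
  <-> avoids null2 op.
Proof.
  split.
  - intros [_ Hi] [S [_ [f [_ [Hinj [_ Hh]]]]]].
    assert (E : op (f true) (f true) = f true) by (rewrite <- (h2 (f true) (f true) (f true)); apply Hi).
    pose proof (Hh true true) as H. unfold null2 in H. rewrite E in H.
    discriminate (Hinj _ _ H).
  - intros Hav.
    assert (Hid : forall x, op x x = x).
    { intros x.
      destruct (Classical_Prop.classic (op x x = x)) as [e|n]; [exact e|].
      exfalso. apply Hav.
      set (a := op x x).
      assert (Pa : forall u v, (u = a \/ u = x) -> (v = a \/ v = x) -> op u v = a).
      { intros u v [->| ->] [->| ->]; unfold a; rewrite ?h1, ?h2, ?h1; reflexivity. }
      exists (fun t => t = a \/ t = x). split.
      + split. * exists x; now right.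
        * intros u v Hu Hv. left. now apply Pa.
      + exists (fun b : bool => if b then x else a). split; [|split; [|split]].
        * intros []; auto.
        * intros [] [] H; auto; exfalso; apply n; unfold a in H; congruence.
        * intros t [->| ->]; [exists false|exists true]; reflexivity.
        * intros u v. unfold null2. symmetry. apply Pa; destruct u; destruct v; auto. }
    split.
    + intros x y z. now rewrite h1, h2.
    + intros x y. now rewrite h2, Hid.
Qed.
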